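(* Let $A\in\mathbb{R}^{m\times n}$, let $\sigma=\|A\|^2$ (squared spectral norm), and let $v\in\mathbb{R}^n$ with $\|v\|=1$. Define $$u=\begin{cases}\dfrac{\sigma v-A^tAv}{\sqrt{\sigma-\|Av\|^2}} & \text{if } v \text{ is not a dominant singular vector of } A,\\[2mm] 0 & \text{otherwise,}\end{cases}$$ and $H=\sigma\mathbf{I}-uu^t$. Then $v^t(H-A^tA)v=0$ and $H\succeq A^tA$.
   Context: $\|\cdot\|$ is the Euclidean norm on vectors and the induced (spectral) norm on matrices, so $\|A\|^2=\lambda_{\max}(A^tA)$. A unit vector $v$ is a dominant singular vector of $A$ if $\|Av\|=\|A\|$ (equivalently, $v$ is an eigenvector of $A^tA$ for its largest eigenvalue); if $v$ is not dominant then $\sigma-\|Av\|^2>0$. $\mathbf I$ is the identity matrix, $M\succeq N$ means $M-N$ is positive semidefinite. *)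

(* Defs.v *)
From HB Require Import structures.
From mathcomp Require Import all_boot all_order all_algebra.
From mathcomp Require Import boolp classical_sets reals.
Set Implicit Arguments. Unset Strict Implicit. Unset Printing Implicit Defensive.
Import Order.TTheory GRing.Theory Num.Theory.
Local Open Scope ring_scope.
Local Open Scope classical_set_scope.

Definition vnorm (R : realType) (n : nat) (x : 'cV[R]_n) : R :=
  Num.sqrt (\sum_(i < n) x i 0 ^+ 2).

Definition opnorm (R : realType) (m n : nat) (A : 'M[R]_(m, n)) : R :=
  sup [set r : R | exists x : 'cV[R]_n, vnorm x = 1 /\ r = vnorm (A *m x)].

(* v is a dominant singular vector of A: ||A v|| = ||A|| (v assumed unit). *)
Definition dominant (R : realType) (m n : nat) (A : 'M[R]_(m, n)) (v : 'cV[R]_n) : Prop :=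
  vnorm (A *m v) = opnorm A.

Definition psd (R : realType) (n : nat) (M : 'M[R]_n) : Prop :=
  forall x : 'cV[R]_n, 0 <= (x^T *m M *m x) 0 0.

(* Main.v *)
Require Import Defs.
From mathcomp Require Import all_boot all_order all_algebra.
From mathcomp Require Import boolp classical_sets reals.
From mathcomp Require Import ring lra.
Import Order.TTheory GRing.Theory Num.Theory.
Local Open Scope ring_scope.

Set Implicit Arguments. Unset Strict Implicit.
Section S.
Variable R : realType.
Implicit Types n m : nat.

Definition qf {n : nat} (x : 'cV[R]_n) : R := (x^T *m x) 0 0.

Lemma qf_sum n (x : 'cV[R]_n) : qf x = \sum_(i < n) x i 0 ^+ 2.
Proof. rewrite /qf mxE; apply: eq_bigr => i _; by rewrite mxE expr2. Qed.

Lemma qf_ge0 n (x : 'cV[R]_n) : 0 <= qf x.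
Proof. rewrite qf_sum; apply: sumr_ge0 => i _; exact: sqr_ge0. Qed.

Lemma vnorm_sq n (x : 'cV[R]_n) : vnorm x ^+ 2 = qf x.
Proof. by rewrite /vnorm -qf_sum sqr_sqrtr // qf_ge0. Qed.

Lemma vnorm_ge0 n (x : 'cV[R]_n) : 0 <= vnorm x.
Proof. exact: sqrtr_ge0. Qed.

Lemma vnormZ n (c : R) (x : 'cV[R]_n) : vnorm (c *: x) = `|c| * vnorm x.
Proof.
rewrite /vnorm (eq_bigr (fun i => c ^+ 2 * x i 0 ^+ 2)); last first.
  by move=> i _; rewrite mxE exprMn.
rewrite -mulr_sumr sqrtrM ?sqr_ge0 // sqrtr_sqr //.
Qed.

Lemma entry_le1 n (x : 'cV[R]_n) j : vnorm x = 1 -> `|x j 0| <= 1.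
Proof.
move=> h; have : qf x = 1 by rewrite -vnorm_sq h expr1n.
rewrite qf_sum (bigD1 j) //= => e.
have : 0 <= \sum_(i < n | i != j) x i 0 ^+ 2 by apply: sumr_ge0 => i _; exact: sqr_ge0.
move=> h2; have h3 : x j 0 ^+ 2 <= 1 by lra.
rewrite -(@ler_pXn2r _ 2) ?nnegrE ?normr_ge0 // ?real_normK ?num_real //.
by rewrite expr1n.
Qed.

Lemma qf_eq0 n (x : 'cV[R]_n) : qf x = 0 -> x = 0.
Proof.
rewrite qf_sum => /eqP; rewrite psumr_eq0 => [h|i _]; last exact: sqr_ge0.
apply/matrixP => i j; rewrite (ord1 j) mxE.
by move/allP: h => /(_ i (mem_index_enum _)) /=; rewrite sqrf_eq0 => /eqP.
Qed.

Lemma opnorm_bound m n (A : 'M[R]_(m, n)) (v : 'cV[R]_n) : vnorm v = 1 ->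
  has_sup [set r : R | exists x : 'cV[R]_n, vnorm x = 1 /\ r = vnorm (A *m x)].
Proof.
move=> hv; split; first by exists (vnorm (A *m v)); exists v.
exists (1 + \sum_(i < m) (\sum_(j < n) `|A i j|) ^+ 2) => r [x [hx ->]].
have h1 : vnorm (A *m x) <= 1 + vnorm (A *m x) ^+ 2.
  have := vnorm_ge0 (A *m x); nra.
apply: (le_trans h1); rewrite lerD2l vnorm_sq qf_sum; apply: ler_sum => i _.
have hb : `|(A *m x) i 0| <= \sum_(j < n) `|A i j|.
  rewrite mxE; apply: (le_trans (ler_norm_sum _ _ _)); apply: ler_sum => j _.
  rewrite normrM; rewrite -{2}(mulr1 `|A i j|); apply: ler_wpM2l => //.
  exact: entry_le1.
have h0 : 0 <= `|(A *m x) i 0| := normr_ge0 _.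
have h1' : 0 <= \sum_(j < n) `|A i j| := le_trans h0 hb.
rewrite -real_normK ?num_real // ler_pXn2r ?nnegrE //.
Qed.

Definition bf {n} (N : 'M[R]_n) (x y : 'cV[R]_n) : R := (x^T *m N *m y) 0 0.

Lemma bfDl n (N : 'M[R]_n) x y z : bf N (x + y) z = bf N x z + bf N y z.
Proof. by rewrite /bf linearD /= !mulmxDl mxE. Qed.
Lemma bfZl n (N : 'M[R]_n) c x z : bf N (c *: x) z = c * bf N x z.
Proof. by rewrite /bf linearZ /= -!scalemxAl mxE. Qed.
Lemma bfDr n (N : 'M[R]_n) x y z : bf N z (x + y) = bf N z x + bf N z y.
Proof. by rewrite /bf !mulmxDr mxE. Qed.
Lemma bfZr n (N : 'M[R]_n) c x z : bf N z (c *: x) = c * bf N z x.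
Proof. by rewrite /bf -!scalemxAr mxE. Qed.
Lemma bfBm n (N1 N2 : 'M[R]_n) x y : bf (N1 - N2) x y = bf N1 x y - bf N2 x y.
Proof. by rewrite /bf mulmxBr mulmxBl !mxE. Qed.
Lemma bf_sym n (N : 'M[R]_n) x y : N^T = N -> bf N x y = bf N y x.
Proof.
move=> hN; rewrite /bf -[in LHS](trmxK (x^T *m N *m y)) [in LHS]mxE.
by rewrite !trmx_mul trmxK hN mulmxA.
Qed.
Lemma bf_scal n (s : R) x : bf (s%:M : 'M[R]_n) x x = s * qf x.
Proof. by rewrite /bf /qf mul_mx_scalar -scalemxAl mxE. Qed.
Lemma bf_AtA m n (A : 'M[R]_(m, n)) x : bf (A^T *m A) x x = qf (A *m x).
Proof. by rewrite /bf /qf trmx_mul !mulmxA. Qed.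
Lemma bf_uu n (u : 'cV[R]_n) x : bf (u *m u^T) x x = ((x^T *m u) 0 0) ^+ 2.
Proof.
rewrite /bf (_ : x^T *m (u *m u^T) *m x = (x^T *m u) *m (u^T *m x)); last by rewrite !mulmxA. rewrite [LHS]mxE. rewrite big_ord1 expr2. congr (_ * _). idtac.
by rewrite -[in LHS](trmxK x) -trmx_mul [in LHS]mxE.
Qed.

Lemma qf0 n : qf (0 : 'cV[R]_n) = 0.
Proof. by rewrite /qf trmx0 mul0mx mxE. Qed.

Lemma opnorm_ub m n (A : 'M[R]_(m, n)) (v x : 'cV[R]_n) : vnorm v = 1 -> vnorm x = 1 ->
  vnorm (A *m x) <= opnorm A.
Proof. move=> hv hx; apply: (sup_upper_bound (opnorm_bound A hv)); by exists x. Qed.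

Lemma qf_bound m n (A : 'M[R]_(m, n)) (v x : 'cV[R]_n) : vnorm v = 1 ->
  qf (A *m x) <= opnorm A ^+ 2 * qf x.
Proof.
move=> hv; have [/qf_eq0 ->|hq] := eqVneq (qf x) 0.
  by rewrite mulmx0 !qf0 mulr0.
have hq0 : 0 < qf x by rewrite lt_def hq qf_ge0.
set r := vnorm x.
have hr : 0 < r by rewrite /r /vnorm -qf_sum sqrtr_gt0.
have hx' : vnorm (r^-1 *: x) = 1 by rewrite vnormZ ger0_norm ?invr_ge0 ?ltW // mulVf // gt_eqF.
have hb := opnorm_ub A hv hx'.
have e : A *m x = r *: (A *m (r^-1 *: x)) by rewrite -scalemxAr scalerA divff ?gt_eqF // scale1r.
rewrite -vnorm_sq -vnorm_sq e vnormZ (ger0_norm (ltW hr)).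
have := vnorm_ge0 (A *m (r^-1 *: x)); rewrite -/r => h0.
have h2 : vnorm (A *m (r^-1 *: x)) ^+ 2 <= opnorm A ^+ 2 by nra.
by rewrite exprMn mulrC; apply: ler_wpM2r => //; exact: sqr_ge0.
Qed.
End S.

Unset Implicit Arguments. Set Strict Implicit.

Theorem lemma1 (R : realType) (m n : nat) (A : 'M[R]_(m, n)) (v : 'cV[R]_n)
  (hv : vnorm v = 1) :
  let sigma := opnorm A ^+ 2 in
  let u : 'cV[R]_n :=
    if `[< dominant A v >] then 0
    else (Num.sqrt (sigma - vnorm (A *m v) ^+ 2))^-1 *: (sigma *: v - A^T *m A *m v) in
  let H : 'M[R]_n := sigma%:M - u *m u^T in
  v^T *m (H - A^T *m A) *m v = 0 /\ psd (H - A^T *m A).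
Proof.
move=> sigma u H.
set P : 'M[R]_n := sigma%:M - A^T *m A.
have hPs : P^T = P by rewrite /P linearB /= tr_scalar_mx trmx_mul trmxK.
have hPq x : bf P x x = sigma * qf x - qf (A *m x) by rewrite /P bfBm bf_scal bf_AtA.
have hqv : qf v = 1 by rewrite -vnorm_sq hv expr1n.
have hPge x : 0 <= bf P x x.
  rewrite hPq subr_ge0 /sigma; exact: (qf_bound A x hv).
have hop0 : 0 <= opnorm A := le_trans (vnorm_ge0 _) (opnorm_ub A hv hv).
have hHM : H - A^T *m A = P - u *m u^T by rewrite /H /P addrAC.
have e11 (M : 'M[R]_1) : M = (M 0 0)%:M.
  by apply/matrixP => i j; rewrite !ord1 mxE.
rewrite hHM /u; case: asboolP => hd.
- rewrite mul0mx subr0; split; last by move=> x; exact: hPge.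
  rewrite [LHS]e11 -/(bf P v v) hPq hqv mulr1 -vnorm_sq hd subrr.
  by apply/matrixP => i j; rewrite !mxE mul0rn.
- set d := sigma - vnorm (A *m v) ^+ 2.
  have hd' : d = bf P v v by rewrite /d hPq hqv mulr1 vnorm_sq.
  have hlt : vnorm (A *m v) < opnorm A.
    by rewrite lt_neqAle (opnorm_ub A hv hv) andbT; apply/eqP.
  have hdp : 0 < d by rewrite /d /sigma; have := vnorm_ge0 (A *m v); nra.
  have ew : sigma *: v - A^T *m A *m v = P *m v.
    by rewrite /P mulmxBl mul_scalar_mx.
  have key x : bf (P - ((Num.sqrt d)^-1 *: (sigma *: v - A^T *m A *m v)) *m
      ((Num.sqrt d)^-1 *: (sigma *: v - A^T *m A *m v))^T) x x
      = bf P x x - d^-1 * bf P x v ^+ 2.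
    rewrite bfBm bf_uu ew -scalemxAr mxE exprMn exprVn sqr_sqrtr ?ltW //.
    by rewrite /bf mulmxA.
  split.
  + rewrite [LHS]e11 -/(bf _ v v) key -hd'.
    have -> : d - d^-1 * d ^+ 2 = 0 by field; rewrite gt_eqF.
    by apply/matrixP => i j; rewrite !mxE mul0rn.
  + move=> x; rewrite -/(bf _ x x) key.
    set a := bf P x x; set b := bf P x v.
    have hx := hPge (x + (- (b / d)) *: v).
    rewrite bfDl !bfDr !bfZl !bfZr (@bf_sym _ _ P v x hPs) -/a -/b -hd' in hx.
    have -> : a - d^-1 * b ^+ 2 =
      a + - (b / d) * b + (- (b / d) * b + - (b / d) * (- (b / d) * d)).
      by field; rewrite gt_eqF.
    exact: hx.
Qed.
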